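(* Let $1<\chi\le\rho$ and let $G$ be a $(\rho,\chi)$-bidding profile. Then for every $T>0$, \[ \tau(T):=\sup\{t\in\mathbb{R}:G(t)<T\}<\infty \quad\text{and}\quad \mathrm{cost}_G(T)=\int_{-\infty}^{\tau(T)+1}G(t)\,\mathrm{d} t . \]
   Context: Online bidding with target $T>0$: a bidder submits increasing positive bids until one is $\ge T$; the cost is the sum of bids up to and including the first bid $\ge T$. Given $1<\chi\le\rho$, a $(\rho,\chi)$-bidding profile is a non-decreasing, left-continuous function $G:\mathbb{R}\to(0,\infty)$ such that (offset) $G(x)<1$ for all $x<0$ and $G(x)\ge 1$ for all $x>0$; (robustness) $\int_{-\infty}^{x+1}G(t)\,\mathrm{d} t\le \rho\,G(x)$ for all $x\in\mathbb{R}$; (consistency) $\int_{-\infty}^{1}G(t)\,\mathrm{d} t\le\chi$. The strategy driven by $G$ is the random bi-infinite bid sequence $(G(n+U))_{n\in\mathbb{Z}}$, where $U\sim\mathrm{Unif}(0,1]$ is a single random variable shared by all $n$; its cost on target $T$ is $\sum_{n\le n_*}G(n+U)$ with $n_*=\min\{n: G(n+U)\ge T\}$, and $\mathrm{cost}_G(T)$ denotes the expectation of this cost over $U$. *)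

(* Defs.v *)
From HB Require Import structures.
From mathcomp Require Import all_boot all_order all_algebra.
From mathcomp Require Import all_classical all_reals all_analysis.
Set Implicit Arguments. Unset Strict Implicit. Unset Printing Implicit Defensive.
Import Order.TTheory GRing.Theory Num.Theory.
Import numFieldNormedType.Exports.
Local Open Scope classical_set_scope.
Local Open Scope ring_scope.

Definition bidding_profile (R : realType) (rho chi : R) (G : R -> R) : Prop :=
  (forall x, 0 < G x) /\
  {homo G : x y / x <= y} /\
  (forall x, G t @[t --> x^'-] --> G x) /\
  (forall x, x < 0 -> G x < 1) /\
  (forall x, 0 < x -> 1 <= G x) /\
      (forall x : R, (\int[@lebesgue_measure R]_(t in `]-oo, (x + 1)%R]) (G t)%:E
                   <= (rho * G x)%:E)%E) /\
  (\int[@lebesgue_measure R]_(t in `]-oo, 1%R]) (G t)%:E <= chi%:E)%E.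

Definition first_hit (R : realType) (G : R -> R) (T u : R) (n : int) : Prop :=
  T <= G (n%:~R + u) /\ forall m : int, (m < n)%R -> G (m%:~R + u) < T.

Definition run_cost (R : realType) (G : R -> R) (T u : R) : \bar R :=
  (\esum_(n in [set n : int | exists ns, first_hit G T u ns /\ (n <= ns)%R])
     (G (n%:~R + u))%:E)%E.

(* expected cost over U ~ Unif(0,1] *)
Definition cost (R : realType) (G : R -> R) (T : R) : \bar R :=
  (\int[@lebesgue_measure R]_(u in `]0%R, 1%R]) run_cost G T u)%E.

(* Main.v *)
Require Import Defs.
From HB Require Import structures.
From mathcomp Require Import all_boot all_order all_algebra.
From mathcomp Require Import all_classical all_reals all_analysis.
From mathcomp Require Import measurable_realfun.
From mathcomp Require Import ring lra.
Set Implicit Arguments. Unset Strict Implicit. Unset Printing Implicit Defensive.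
Import Order.TTheory GRing.Theory Num.Theory.
Import numFieldNormedType.Exports.
Local Open Scope classical_set_scope.
Local Open Scope ring_scope.
Section Helpers.
Context {R : realType}.
Local Notation mu := (@lebesgue_measure R).
Lemma lebesgue_shift (b : R) (A : set R) : measurable A ->
  pushforward mu (fun u : measurableTypeR R => b + u) A = mu A.
Proof.
move=> mA.
have mphi : @measurable_fun _ _ (measurableTypeR R) (measurableTypeR R) setT (fun u => b + u).
  by apply: nondecreasing_measurable => // x y xy; rewrite lerD2l.
have := @lebesgue_measure_unique R (measure_function_pushforward__canonical__measure_function_Measure mu mphi).
move=> H; symmetry; apply: H => //.
move=> _ [[x y]] _ <-; change (mu `]x, y]%classic = mu ((fun u : measurableTypeR R => b + u) @^-1` `]x, y]%classic)).
have -> : (fun u : measurableTypeR R => b + u) @^-1` `]x, y] = `]x - b, y - b]%classic.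
  by apply/seteqP; split => u /=; rewrite !in_itv /= ltrBlDl lerBrDl.
rewrite !lebesgue_measure_itv /= !lte_fin ltrBrDr subrK; case: ifP => // _.
by rewrite -EFinD; congr (_%:E); lra.
Qed.
Lemma integral_shift01 (f : R -> \bar R) (b : R) : measurable_fun setT f ->
  (forall x, (0 <= f x)%E) ->
  (\int[mu]_(u in `]0%R, 1%R]) f (b + u)%R = \int[mu]_(t in `]b, (b + 1)%R]) f t)%E.
Proof.
move=> mf f0.
have mphi : @measurable_fun _ _ (measurableTypeR R) (measurableTypeR R) setT (fun u => b + u).
  by apply: nondecreasing_measurable => // x y xy; rewrite lerD2l.
rewrite [RHS](@eq_measure_integral _ _ _ _ (measure_function_pushforward__canonical__measure_function_Measure mu mphi)); last first.
  by move=> A mA _; symmetry; apply: (lebesgue_shift b mA).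
rewrite [RHS]ge0_integral_pushforward //; last by apply: measurable_funS mf.
have -> : (fun u : measurableTypeR R => b + u) @^-1` `]b, b + 1]%classic = `]0, 1]%classic.
  by apply/seteqP; split => u /=; rewrite !in_itv /= ltrDl lerD2l.
by [].
Qed.
Lemma esum_le_int (f : int -> \bar R) (a : int) : (forall n, (0 <= f n)%E) ->
  (\esum_(n in [set n : int | (n <= a)%R]) f n = \sum_(k <oo) f (a - k%:Z)%R)%E.
Proof.
move=> f0; rewrite (@reindex_esum _ _ _ setT _ (fun k : nat => a - k%:Z)).
  by rewrite nneseries_esumT.
split.
- by move=> k _ /=; rewrite lerBlDr lerDl.
- by move=> k j _ _ /= /(congr1 (fun x => a - x)); rewrite !subKr => -[].
- move=> n /= na; exists (absz (a - n)) => //.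
  by rewrite gez0_abs ?subr_ge0 // subKr.
Qed.
Lemma integral_union_itv (h : R -> \bar R) (a : int) : measurable_fun setT h ->
  (forall x, (0 <= h x)%E) ->
  (\sum_(k <oo) \int[mu]_(t in `](a - k%:Z)%:~R, (a - k%:Z + 1)%:~R]) h t
   = \int[mu]_(t in `]-oo, (a + 1)%:~R]) h t)%E.
Proof.
move=> mh h0.
have U : `]-oo, (a + 1)%:~R]%classic =
    \bigcup_(k in setT) `](a - k%:Z)%:~R, (a - k%:Z + 1)%:~R]%classic :> set R.
  apply/seteqP; split => t /=.
  - rewrite in_itv /= => ta.
    have ca : Num.ceil t <= a + 1 by rewrite ceil_le_int.
    exists (absz (a + 1 - Num.ceil t)%R) => //=.
    rewrite gez0_abs ?subr_ge0 //.
    have -> : a - (a + 1 - Num.ceil t) = Num.ceil t - 1 by ring.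
    by rewrite subrK; exact: ceil_itv.
  - move=> [k _] /=; rewrite !in_itv /= => /andP[_ tk]; apply: (le_trans tk).
    by rewrite ler_int lerD2r lerBlDr lerDl.
rewrite U; apply/esym; apply: ge0_integral_bigcup.
- by move=> k; exact: measurable_itv.
- by rewrite -U; exact: measurable_funS mh.
- by move=> x _; exact: h0.
- move=> i j _ _ [t [/=]]; rewrite !in_itv /= => ti tj.
  have ei : Num.ceil t = a - i%:Z + 1 by apply: ceil_def; rewrite addrK.
  have ej : Num.ceil t = a - j%:Z + 1 by apply: ceil_def; rewrite addrK.
  by move: ei; rewrite ej => /addIr /(congr1 (fun x => a - x)); rewrite !subKr => -[].
Qed.
End Helpers.

Unset Implicit Arguments. Set Strict Implicit.

Theorem lemma1 (R : realType) (rho chi : R) (G : R -> R) :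
  1 < chi -> chi <= rho -> bidding_profile rho chi G ->
  forall T : R, 0 < T ->
    (ereal_sup [set t%:E | t in [set t : R | (G t < T)%R]] < +oo)%E /\
    cost G T =
      (\int[@lebesgue_measure R]_(t in
          `]-oo, (fine (ereal_sup [set t%:E | t in [set t : R | (G t < T)%R]]) + 1)%R])
         (G t)%:E)%E.
Proof.
move=> chi1 chirho [G0 [Gmono [Glc [Gneg [Gpos [Grob Gcons]]]]]] T T0.
have rho0 : 0 < rho by apply: lt_trans (lt_le_trans chi1 chirho).
have mG : measurable_fun setT G by apply: nondecreasing_measurable.
have mGE : measurable_fun setT (EFin \o G) by apply/measurable_EFinP.
set E := [set t : R | G t < T].
have E0 : E !=set0.
  apply: contrapT => HE.
  have GT : forall t, T <= G t.
    by move=> t; rewrite leNgt; apply/negP => Gt; apply: HE; exists t.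
  have : (\int[@lebesgue_measure R]_(t in `]-oo, 1%R]) (cst T%:E) t <= chi%:E)%E.
    apply: le_trans Gcons; apply: ge0_le_integral => //.
    all: try (by move=> t _ /=; rewrite lee_fin GT).
    all: try (by move=> t _ /=; rewrite lee_fin ltW).
    all: try (by apply: measurable_funS mGE).
  move=> H; have : (T%:E * (@lebesgue_measure R) `]-oo, 1%R]%classic <= chi%:E)%E.
    rewrite -(@integral_cst _ _ _ (@lebesgue_measure R) `]-oo, 1%R]%classic (measurable_itv _) T%:E); exact: H.
  rewrite lebesgue_measure_itv /= ltNye addey // gt0_muley ?lte_fin //.
have Glow : forall x, 0 <= x -> x + 1 <= rho * G x.
  move=> x x0; rewrite -lee_fin; apply: le_trans (Grob x).
  have : (\int[@lebesgue_measure R]_(t in `]0%R, (x + 1)%R]) (cst 1%:E) t <=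
          \int[@lebesgue_measure R]_(t in `]-oo, (x + 1)%R]) (G t)%:E)%E.
    have S1 := @ge0_subset_integral _ _ _ (@lebesgue_measure R) _ _
      (measurable_itv `]0%R, (x+1)%R]) (measurable_itv `]-oo, (x+1)%R]) (EFin \o G).
    apply: le_trans (S1 _ _ _).
    - apply: ge0_le_integral => //.
      + by apply: measurable_funS mGE.
      + by move=> t /=; rewrite in_itv /= => /andP[t0 _]; rewrite lee_fin Gpos.
    - by apply: measurable_funS mGE.
    - by move=> t _; rewrite lee_fin ltW.
    - by move=> t /=; rewrite !in_itv /= => /andP[].
  move=> H; apply: le_trans H.
  have I1 : (\int[@lebesgue_measure R]_(t in `]0%R, (x + 1)%R]) (cst 1%:E) t = (x+1)%:E)%E.
    have x1 : 0 < x + 1 by lra.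
    by rewrite integral_cst //= lebesgue_measure_itv /= lte_fin x1 -EFinD -EFinM oppr0 addr0 mul1r.
  by rewrite I1.
have Eub : ubound E (rho * T).
  move=> t Et; rewrite leNgt; apply/negP => lt.
  have rT0 : 0 <= rho * T by rewrite mulr_ge0 // ltW.
  have h1 := Glow (rho * T) rT0.
  have h2 : G (rho * T) <= G t by apply: Gmono; exact: ltW.
  have h3 : rho * G (rho * T) < rho * T.
    by rewrite ltr_pM2l //; apply: le_lt_trans h2 _; exact: Et.
  lra.
have Ehub : has_ubound E by exists (rho * T).
set tau := sup E.
have Hs : ereal_sup [set t%:E | t in E] = tau%:E := ereal_sup_EFin Ehub E0.
rewrite Hs /=; split; first exact: ltry.
have P1 : forall t, t < tau -> G t < T.
  move=> t tt; have [y Ey ty] := sup_gt E0 tt.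
  by apply: le_lt_trans Ey; apply: Gmono; exact: ltW.
have P2 : forall t, tau < t -> T <= G t.
  move=> t tt; rewrite leNgt; apply/negP => Gt.
  have := ub_le_sup Ehub Gt; rewrite -/tau => tle.
  by move: tt; rewrite ltNge tle.
set a := Num.ceil tau.
have /andP[ha1 ha2] : (a - 1)%:~R < tau <= a%:~R := ceil_itv tau.
have iB1 : forall z : int, (z - 1)%:~R = z%:~R - 1 :> R by move=> z; rewrite intrB.
rewrite iB1 in ha1.
pose c := tau + 1; have cE : c = tau + 1 by [].
pose u0 := c - a%:~R; have u0E : u0 = c - a%:~R by [].
clearbody u0 c.
pose H : R -> \bar R := fun t => if t <= c then (G t)%:E else 0%E.
have H0 : forall t, (0 <= H t)%E.
  by move=> t; rewrite /H; case: ifP => // _; rewrite lee_fin ltW.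
have mH : measurable_fun setT H.
  have -> : H = (EFin \o G) \_ `]-oo, c].
    apply/funext => t; rewrite patchE /H mem_setE in_itv /=.
    by case: ifP.
  apply/(measurable_restrictT _ _).1 => //.
  exact: measurable_funS mGE.
have KR : forall u, 0 < u <= 1 -> u != u0 ->
    run_cost G T u = (\sum_(k <oo) H ((a - k%:Z)%:~R + u)%R)%E.
  move=> u /andP[u0' u1] uu0.
  set ns0 := if u < u0 then a else a - 1.
  have fh : first_hit G T u ns0.
    split.
    - apply: P2; rewrite /ns0; case: ifP => uu.
      + by apply: le_lt_trans ha2 _; rewrite ltrDl.
      + have uu' : u0 < u by rewrite lt_neqAle eq_sym uu0 /= leNgt uu.
        rewrite iB1; lra.
    - move=> m mlt; apply: P1.
      have mle : m <= ns0 - 1 by rewrite -ltzD1 subrK.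
      have mle' : m%:~R <= (ns0 - 1)%:~R :> R by rewrite ler_int.
      move: mle'; rewrite /ns0; case: ifP => uu.
      + by rewrite iB1 => ?; lra.
      + rewrite !iB1 => ?; lra.
  have Q : forall n : int, (exists ns, first_hit G T u ns /\ n <= ns) <-> n%:~R + u <= c.
    move=> n; split.
    - move=> [ns [[_ fh2] nns]].
      have : G ((ns - 1)%:~R + u) < T by apply: fh2; rewrite ltrBlDr ltrDl.
      move=> Gl; have : (ns - 1)%:~R + u <= tau.
        by rewrite leNgt; apply/negP => /P2; rewrite leNgt Gl.
      have : n%:~R <= ns%:~R :> R by rewrite ler_int.
      rewrite iB1; lra.
    - move=> nc; exists ns0; split => //.
      rewrite /ns0; case: ifP => uu.
      + rewrite -ltzD1 -(ltr_int R) intrD1; lra.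
      + have uu' : u0 < u by rewrite lt_neqAle eq_sym uu0 /= leNgt uu.
        rewrite -ltzD1 subrK -(ltr_int R); lra.
  rewrite /run_cost esum_mkcond -(@esum_le_int R (fun n => H (n%:~R + u)) a) // [RHS]esum_mkcond.
  apply: eq_esum => n _.
  have [Qn|nQn] := boolP (n%:~R + u <= c).
  - have na : n <= a by rewrite -ltzD1 -(ltr_int R) intrD1; lra.
    rewrite (@mem_set _ [set n | exists ns, first_hit G T u ns /\ n <= ns] n ((Q n).2 Qn)).
    by rewrite (@mem_set _ [set n : int | n <= a] n na) /H Qn.
  - rewrite memNset; last by move/Q; rewrite (negbTE nQn).
    by rewrite /H (negbTE nQn); case: ifP.
rewrite -cE.
pose F := fun u => (\sum_(k <oo) H ((a - k%:Z)%:~R + u)%R)%E.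
have mterm : forall k : nat, measurable_fun setT (fun u : R => H ((a - k%:Z)%:~R + u)).
  move=> k.
  have mphi : measurable_fun setT (fun u : R => (a - k%:Z)%:~R + u).
    by apply: nondecreasing_measurable => // x y xy; rewrite lerD2l.
  exact: (measurableT_comp mH mphi).
have mF : forall D, measurable D -> measurable_fun D F.
  move=> D mD; apply: ge0_emeasurable_sum.
  - by move=> k x _ _; exact: H0.
  - by move=> k _; exact: measurable_funS (mterm k).
have mD1 : measurable (`]0%R, 1%R] `\ u0) by apply: measurableD => //; exact: measurable_set1.
have eqF : {in `]0%R, 1%R] `\ u0, F =1 run_cost G T}.
  move=> u; rewrite inE => -[/=]; rewrite in_itv /= => u01 uu0.
  by rewrite KR //; apply/eqP.
rewrite /cost -(integral_setD1 mD1); last first.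
  exact: eq_measurable_fun eqF (mF _ mD1).
rewrite -(@eq_integral _ _ _ (@lebesgue_measure R) _ _ _ eqF) (integral_setD1 mD1 (mF _ mD1)).
rewrite /F integral_nneseries //; last first.
  by move=> k; exact: measurable_funS (mterm k).
transitivity (\sum_(k <oo) \int[@lebesgue_measure R]_(t in `](a - k%:Z)%:~R, (a - k%:Z + 1)%:~R]) H t)%E.
  apply: eq_eseriesr => k _; rewrite intrD1; exact: integral_shift01.
rewrite integral_union_itv //.
rewrite integral_mkcond [RHS]integral_mkcond; apply: eq_integral => t _.
rewrite !patchE !mem_setE !in_itv /= /H.
have [tc|tc] := boolP (t <= c).
- have -> : t <= (a + 1)%:~R by rewrite intrD1; lra.
  by [].
- by case: ifP.
Qed.
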